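(* Let $p$ be an odd prime and let $n,s$ be positive integers such that $2n/s\geq 3$ is an odd integer; put $q=p^n$, $d=p^s$. Fix $\mu\in\mathbb{F}_{q^2}\setminus\mathbb{F}_q$ such that $\mu^d=u_1+u_2\mu$ with $u_1,u_2\in\mathbb{F}_q$ and $u_2$ a $(d-1)$-th power in $\mathbb{F}_{q^2}$. Let \[ J=\{(a^d+a,\,x_1+x_2\mu): a,x_1\in\mathbb{F}_q,\ x_2\in\mathbb{F}_q^*\},\qquad K=\bigcup_{\beta\in\mathbb{F}_q}\phi_{(\beta\mu)^d+\beta\mu}(J). \] Then the subgraph $\mathcal{A}_{q^2,d}[K]$ of $\mathcal{A}_{q^2,d}$ induced by $K$ satisfies $\chi(\mathcal{A}_{q^2,d}[K])\leq 2q$.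
   Context: The map $x\mapsto x^d+x$ is a bijection of $\mathbb{F}_{q^2}$. The graph $\mathcal{A}_{q^2,d}$ has vertex set $\mathbb{F}_{q^2}\times\mathbb{F}_{q^2}$; writing vertices as $(a^d+a,x)$ and $(b^d+b,y)$ with $a,b,x,y\in\mathbb{F}_{q^2}$ (uniquely), two distinct vertices are adjacent iff $a^db+ab^d=x+y$. For $k=\alpha^d+\alpha\in\mathbb{F}_{q^2}$, $\phi_k$ is the map $(a^d+a,x)\mapsto(a^d+a+k,\ x+a^d\alpha+a\alpha^d+\alpha^{d+1})$. $\mathbb{F}_q$ is the subfield of $\mathbb{F}_{q^2}$ of order $q$; $\chi$ is the chromatic number. *)

(* Defs.v *)
From HB Require Import structures.
From mathcomp Require Import all_boot all_order all_algebra all_field.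
Set Implicit Arguments. Unset Strict Implicit. Unset Printing Implicit Defensive.
Import GRing.Theory.
Local Open Scope ring_scope.

Section Defs.
Variable F : finFieldType.

(* membership in the subfield of order q of F (F of order q^2): x^q = x *)
Definition inFq (q : nat) (x : F) : bool := x ^+ q == x.

Definition Aadj (d : nat) : rel (F * F) := fun v w =>
  (v != w) &&
  [exists a : F, exists b : F,
     [&& a ^+ d + a == v.1, b ^+ d + b == w.1 &
         a ^+ d * b + a * b ^+ d == v.2 + w.2]].

(* phi_k with k = alpha^d + alpha:
   (a^d+a, x) |-> (a^d+a+k, x + a^d alpha + a alpha^d + alpha^(d+1)),
   where a is the (unique, by bijectivity) preimage of the first coordinate. *)
Definition phi (d : nat) (alpha : F) (v : F * F) : F * F :=
  match [pick a : F | a ^+ d + a == v.1] with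
  | Some a => (v.1 + (alpha ^+ d + alpha),
               v.2 + a ^+ d * alpha + a * alpha ^+ d + alpha ^+ d.+1)
  | None => v
  end.

Definition setJ (q d : nat) (mu : F) : {set F * F} :=
  [set v | [exists a : F, exists x1 : F, exists x2 : F,
     [&& inFq q a, inFq q x1, inFq q x2, x2 != 0 &
         v == (a ^+ d + a, x1 + x2 * mu)]]].

Definition setK (q d : nat) (mu : F) : {set F * F} :=
  \bigcup_(beta | inFq q beta) (phi d (beta * mu) @: setJ q d mu).

End Defs.

Definition colorableb (T : finType) (adj : rel T) (S : {set T}) (k : nat) : bool :=
  [exists c : {ffun T -> 'I_k},
     [forall u in S, forall v in S, adj u v ==> (c u != c v)]].

Definition chromatic_number (T : finType) (adj : rel T) (S : {set T}) : nat :=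
  \big[minn/#|T|]_(k < #|T|.+1 | colorableb adj S k) (k : nat).

(* Main.v *)
Require Import Defs.
From HB Require Import structures.
From mathcomp Require Import all_boot all_order all_algebra all_field.
From mathcomp Require Import ring.
Import GRing.Theory.
Local Open Scope ring_scope.

Section Helpers.
Variables (F : finFieldType) (p : nat).
Hypothesis pF : p \in [pchar F].
Hypothesis podd : odd p.

Lemma pnatF k : [pchar F].-nat (p ^ k)%N.
Proof.
rewrite (eq_pnat _ (pcharf_eq pF)) pnatX (pnat_id (pcharf_prime pF)) //.
Qed.

Lemma frobD k (x y : F) : (x + y) ^+ (p ^ k) = x ^+ (p ^ k) + y ^+ (p ^ k).
Proof. exact: exprDn_pchar (pnatF k). Qed.

Lemma frobN k (x : F) : (- x) ^+ (p ^ k) = - x ^+ (p ^ k).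
Proof. exact: exprNn_pchar (pnatF k). Qed.

Lemma two_neq0 : (2%:R : F) != 0.
Proof.
apply/eqP => h.
have : (2 \in [pchar F])%N by apply/andP; split => //; apply/eqP.
rewrite (pcharf_eq pF) inE => /eqP p2.
by move: podd; rewrite -p2.
Qed.

Lemma xx0 (x : F) : x + x = 0 -> x = 0.
Proof.
move=> h; have : 2%:R * x = 0 by rewrite mulr_natl mulr2n.
by move/eqP; rewrite mulf_eq0 (negPf two_neq0) /= => /eqP.
Qed.

Variables (s m : nat).
Hypothesis cardF : #|F| = ((p ^ s) ^ m)%N.
Hypothesis modd : odd m.

Lemma h_inj (x y : F) : x ^+ (p ^ s) + x = y ^+ (p ^ s) + y -> x = y.
Proof.
move=> e.
have zd : (x - y) ^+ (p ^ s) = - (x - y).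
  rewrite frobD frobN.
  have e' : y ^+ (p ^ s) = x ^+ (p ^ s) + x - y by rewrite e; ring.
  rewrite e'; ring.
have it : forall j, (x - y) ^+ ((p ^ s) ^ j) = if odd j then - (x - y) else (x - y).
  elim => [|j IH]; first by rewrite expn0 expr1.
  rewrite expnSr exprM IH /=; case: (odd j) => /=; last exact: zd.
  by rewrite frobN zd opprK.
have := it m; rewrite -cardF expf_card modd => h.
apply/eqP; rewrite -subr_eq0; apply/eqP; apply: xx0.
by rewrite {1}h addNr.
Qed.

Variable n : nat.
Notation q := (p ^ n)%N.
Notation d := (p ^ s)%N.

Lemma FqD (x y : F) : inFq q x -> inFq q y -> inFq q (x + y).
Proof. by rewrite /inFq frobD => /eqP-> /eqP->. Qed.
Lemma FqN (x : F) : inFq q x -> inFq q (- x).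
Proof. by rewrite /inFq frobN => /eqP->. Qed.
Lemma FqM (x y : F) : inFq q x -> inFq q y -> inFq q (x * y).
Proof. by rewrite /inFq exprMn => /eqP-> /eqP->. Qed.
Lemma FqV (x : F) : inFq q x -> inFq q x^-1.
Proof. by rewrite /inFq exprVn => /eqP->. Qed.
Lemma FqX k (x : F) : inFq q x -> inFq q (x ^+ k).
Proof. by rewrite /inFq -exprM mulnC exprM => /eqP->. Qed.

Lemma phiE (al a y : F) : phi d al (a ^+ d + a, y) =
  (a ^+ d + a + (al ^+ d + al), y + a ^+ d * al + a * al ^+ d + al ^+ d.+1).
Proof.
rewrite /phi; case: pickP => [a' /= /eqP /h_inj -> // | /(_ a) /=].
by rewrite eqxx.
Qed.

Lemma eq_via (A B C D : F) : A = B -> C - D = A - B -> C = D.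
Proof. by move=> ->; rewrite subrr => /eqP; rewrite subr_eq0 => /eqP. Qed.

Variable mu : F.
Hypothesis mu_notin : ~~ inFq q mu.

Lemma adj_key be a x1 x2 b z1 z2 :
  inFq q a -> inFq q x1 -> inFq q b -> inFq q z1 ->
  inFq q x2 -> inFq q z2 ->
  Aadj d (phi d (be * mu) (a ^+ d + a, x1 + x2 * mu))
         (phi d (be * mu) (b ^+ d + b, z1 + z2 * mu)) -> x2 + z2 = 0.
Proof.
move=> Fa Fx1 Fb Fz1 Fx2 Fz2.
rewrite !phiE /Aadj => /andP[_ /existsP[a' /existsP[b' /and3P[e1 e2 e3]]]].
move: e1 e2 e3 => /=.
have hh : forall c al : F, c ^+ d + c + (al ^+ d + al) = (c + al) ^+ d + (c + al).
  by move=> c al; rewrite frobD; ring.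
rewrite hh => /eqP /h_inj ->.
rewrite hh => /eqP /h_inj ->.
rewrite !frobD !exprS => /eqP e3.
have E : a ^+ d * b + a * b ^+ d - x1 - z1 = (x2 + z2) * mu.
  have {}e3 : _ = _ :> F := e3.
  apply: (eq_via _ _ _ _ e3); ring.
apply/eqP; apply: contraR mu_notin => nz.
have -> : mu = (x2 + z2)^-1 * (a ^+ d * b + a * b ^+ d - x1 - z1).
  by rewrite E mulKf.
apply: FqM; first by apply: FqV; apply: FqD.
apply: FqD; last exact: FqN.
apply: FqD; last exact: FqN.
by apply: FqD; apply: FqM => //; apply: FqX.
Qed.

End Helpers.

Lemma card_Fq (F : finFieldType) (q : nat) : (1 < q)%N -> (#|[set x : F | inFq q x]| <= q)%N.
Proof.
move=> q1; set S := [set x : F | inFq q x].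
have P0 : ('X^q - 'X : {poly F}) != 0.
  by rewrite -size_poly_eq0 size_polyDl ?size_polyXn // size_polyN size_polyX ltnS.
have := max_poly_roots P0 _ (enum_uniq (pred_of_set S)).
rewrite size_polyDl ?size_polyXn ?size_polyN ?size_polyX ?ltnS // -cardE; apply.
apply/allP => x; rewrite mem_enum inE /inFq rootE !hornerE => /eqP->.
by rewrite subrr.
Qed.

Lemma bigmin_le_nat (I : eqType) (r : seq I) (P : pred I) (G : I -> nat) x j :
  j \in r -> P j -> (\big[minn/x]_(i <- r | P i) G i <= G j)%N.
Proof.
elim: r => //= a r IH; rewrite inE big_cons; case/orP => [/eqP<- ->|jr Pj].
  exact: geq_minl.
case: (P a); last exact: IH.
exact: leq_trans (geq_minr _ _) (IH jr Pj).
Qed.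

From mathcomp Require Import zify.

Lemma aux2 (i j c : nat) (b1 b2 : bool) : (i < c)%N -> (j < c)%N ->
  (i + (if b1 then c else 0) = j + (if b2 then c else 0))%N -> i = j /\ b1 = b2.
Proof. by case: b1; case: b2 => /= *; split => //; lia. Qed.

Lemma aux3 (a b : nat) : (a < b)%N = (b < a)%N -> a = b.
Proof. by case: ltngtP. Qed.

Theorem lemma9 (p n s : nat) (F : finFieldType) (mu u1 u2 : F) :
  prime p -> odd p -> (0 < n)%N -> (0 < s)%N ->
  (s %| 2 * n)%N -> odd (2 * n %/ s) -> (3 <= 2 * n %/ s)%N ->
  #|F| = ((p ^ n) ^ 2)%N ->
  ~~ inFq (p ^ n) mu ->
  inFq (p ^ n) u1 -> inFq (p ^ n) u2 ->
  mu ^+ (p ^ s) = u1 + u2 * mu ->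
  (exists w : F, w ^+ (p ^ s).-1 = u2) ->
  (chromatic_number (Aadj (p ^ s)) (setK (p ^ n) (p ^ s) mu) <= 2 * p ^ n)%N.
Proof.
move=> pr po n0 s0 sdiv modd _ cardF munot _ _ _ _.
have pF : p \in [pchar F].
  by apply: (@card_finPcharP _ _ (n * 2)) => //; rewrite cardF expnM.
have cardF' : #|F| = ((p ^ s) ^ (2 * n %/ s))%N.
  by rewrite cardF -!expnM [(s * _)%N]mulnC divnK // mulnC.
have q1 : (1 < p ^ n)%N.
  have p1 := prime_gt1 pr.
  by apply: (leq_trans p1); rewrite -{1}(expn1 p); exact: leq_pexp2l (prime_gt0 pr) n0.
set S := [set x : F | inFq (p ^ n) x].
have cS : (#|S| <= p ^ n)%N by apply: card_Fq.
pose Pr (v : F * F) (t : F * F * F * F) := [&& inFq (p ^ n) t.1.1.1, inFq (p ^ n) t.1.1.2,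
   inFq (p ^ n) t.1.2, inFq (p ^ n) t.2, t.2 != 0 &
   v == phi (p ^ s) (t.1.1.1 * mu) (t.1.1.2 ^+ (p ^ s) + t.1.1.2, t.1.2 + t.2 * mu)].
pose rep v := [pick t | Pr v t].
pose bit (x : F) := (enum_rank x < enum_rank (- x))%N.
pose N v := if rep v is Some t then
   (index t.1.1.1 (enum S) + (if bit t.2 then #|S| else 0))%N else 0%N.
have repK : forall v, v \in setK (p ^ n) (p ^ s) mu -> exists t, rep v = Some t /\ Pr v t.
  move=> v /bigcupP [be Fbe /imsetP [w wJ ->]].
  move: wJ; rewrite inE => /existsP [a /existsP [x1 /existsP [x2 /and5P [Fa Fx1 Fx2 x20 /eqP ->]]]].
  rewrite /rep; case: pickP => [t Ht | /(_ (be, a, x1, x2))]; first by exists t.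
  by rewrite /Pr /= Fbe Fa Fx1 Fx2 x20 eqxx.
have idxS : forall be, inFq (p ^ n) be -> (index be (enum S) < #|S|)%N.
  by move=> be Fbe; rewrite cardE index_mem mem_enum inE.
have Nlt : forall v, v \in setK (p ^ n) (p ^ s) mu -> (N v < 2 * p ^ n)%N.
  move=> v /repK [[[[be a] x1] x2] [rv /and5P [Fbe _ _ _ _]]].
  rewrite /N rv /=; set i := index be _.
  have : (i < #|S|)%N by rewrite /i cardE index_mem mem_enum inE.
  have aux : forall i c q, (i < c)%N -> (c <= q)%N -> (i + c < 2 * q)%N /\ (i + 0 < 2 * q)%N.
    by move=> *; split; lia.
  case: ifP => _ hi; [exact: (aux _ _ _ hi cS).1 | exact: (aux _ _ _ hi cS).2].
have NE : forall v be a x1 x2, rep v = Some (be, a, x1, x2) ->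
    N v = (index be (enum S) + (if bit x2 then #|S| else 0))%N.
  by move=> v be a x1 x2 h; rewrite /N h.
have key : forall u v, u \in setK (p ^ n) (p ^ s) mu -> v \in setK (p ^ n) (p ^ s) mu ->
    Aadj (p ^ s) u v -> N u != N v.
  move=> u v /repK [[[[be a] x1] x2] [ru /and5P [Fbe Fa Fx1 Fx2 /andP [x20 /eqP eu]]]].
  move=> /repK [[[[ga b] z1] z2] [rv /and5P [Fga Fb Fz1 Fz2 /andP [z20 /eqP ev]]]].
  move: Fbe Fa Fx1 Fx2 x20 eu Fga Fb Fz1 Fz2 z20 ev => /= Fbe Fa Fx1 Fx2 x20 eu Fga Fb Fz1 Fz2 z20 ev.
  rewrite (NE _ _ _ _ _ ru) (NE _ _ _ _ _ rv) eu ev => adj; apply/eqP => eqN.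
  have [ei eb] := aux2 _ _ _ _ _ (idxS _ Fbe) (idxS _ Fga) eqN.
  have ebg : be = ga by apply: (index_inj be _ _ ei); rewrite mem_enum inE.
  rewrite -ebg in adj.
  have := @adj_key _ _ pF po _ _ cardF' modd _ _ munot _ _ _ _ _ _ _ Fa Fx1 Fb Fz1 Fx2 Fz2 adj.
  move/eqP; rewrite addr_eq0 => /eqP x2E.
  move: eb; rewrite x2E /bit opprK => /aux3 /val_inj /enum_rank_inj ez.
  move: z20; suff -> : z2 = 0 by rewrite eqxx.
  by apply: (@xx0 _ _ pF po); rewrite -{1}ez addNr.
have k0 : (0 < 2 * p ^ n)%N by lia.
have col : colorableb (Aadj (p ^ s)) (setK (p ^ n) (p ^ s) mu) (2 * p ^ n).
  apply/existsP; exists [ffun v => insubd (Ordinal k0) (N v)].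
  apply/forallP => u; apply/implyP => uK; apply/forallP => v; apply/implyP => vK.
  apply/implyP => adj; rewrite !ffunE; apply/negP => /eqP /(congr1 val).
  rewrite !insubdK ?inE; [exact/eqP/key | exact: Nlt | exact: Nlt].
have kT : (2 * p ^ n < #|{: F * F}|.+1)%N.
  rewrite card_prod cardF; set q := (p ^ n)%N; rewrite ltnS; nia.
rewrite /chromatic_number.
exact: (@bigmin_le_nat _ _ _ (fun k : 'I__ => nat_of_ord k) _ (Ordinal kT) (mem_index_enum _) col).
Qed.
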